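(* A pointed connected graph $(g,v_0)\in\mathscr G_c^\bullet[U]$ is a prime structure of the set operad $\mathscr G_c^\bullet$ if and only if the graph $g$ is nonseparable, i.e. has no cutpoint.
   Context: $\mathscr G_c^\bullet[U]$ is the set of pairs $(g,v)$, where $g$ is a simple connected graph on vertex set $U$ and $v\in U$. It is a set operad with the following product. For an assembly $\{(g_B,v_B)\}_{B\in\pi}$ and an outer structure $(g'_\pi,B_0)$ (a connected graph on $\pi$ with distinguished block $B_0$), the product is $(g,v_{B_0})$. Here $g$ has all edges of the $g_B$, plus the edge $\{v_B,v_{B'}\}$ for each edge $\{B,B'\}$ of $g'_\pi$. A structure $m\in M[U]$ of a set operad $(M,\eta)$ is prime if whenever $m=\eta(a,m')$ then either $a$ is the assembly of singleton structures (and $m'$ is isomorphic to $m$), or $a=\{m\}$ (and $m'$ is the singleton structure on $\{U\}$). A cutpoint of a connected graph $g$ is a vertex whose deletion disconnects $g$. *)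

(* Defs.v *)
From mathcomp Require Import all_boot.
Set Implicit Arguments. Unset Strict Implicit. Unset Printing Implicit Defensive.

Definition simple_graph (V : finType) (U : {set V}) (E : {set {set V}}) : Prop :=
  forall e, e \in E -> exists x y, [/\ x != y, x \in U, y \in U & e = [set x; y]].

Definition adj (V : finType) (E : {set {set V}}) : rel V :=
  fun x y => [set x; y] \in E.

(* connectedness of the graph (U, E) (edges of E lie inside U) *)
Definition gconnected (V : finType) (U : {set V}) (E : {set {set V}}) : Prop :=
  forall x y, x \in U -> y \in U -> connect (adj E) x y.

Definition pointed_conn (V : finType) (U : {set V}) (E : {set {set V}}) (v : V) : Prop :=
  [/\ simple_graph U E, gconnected U E & v \in U].

(* Edge set of the operad product of the assembly {(gB B, vB B)}_{B in pi}
   with the outer structure (Eo, B0) on pi; the root of the product is vB B0. *)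
Definition prod_edges (T : finType) (pi : {set {set T}})
    (gB : {set T} -> {set {set T}}) (vB : {set T} -> T)
    (Eo : {set {set {set T}}}) : {set {set T}} :=
  (\bigcup_(B in pi) gB B) :|:
  [set [set vB B; vB B'] | B in pi, B' in pi & [set B; B'] \in Eo].

(* Prime structures of the set operad G_c^bullet: whenever (E, v) = eta(a, m')
   with a = {(gB B, vB B)}_{B in pi} an assembly over a partition pi of U and
   m' = (Eo, B0) in G_c^bullet[pi], then either a is the assembly of singleton
   structures (pi is the partition into singletons), or a = {(E, v)}. *)
Definition is_prime (T : finType) (U : {set T}) (E : {set {set T}}) (v : T) : Prop :=
  forall (pi : {set {set T}}) (gB : {set T} -> {set {set T}}) (vB : {set T} -> T)
         (Eo : {set {set {set T}}}) (B0 : {set T}),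
    partition pi U ->
    (forall B, B \in pi -> pointed_conn B (gB B) (vB B)) ->
    pointed_conn pi Eo B0 ->
    E = prod_edges pi gB vB Eo -> v = vB B0 ->
    pi = [set [set x] | x in U] \/ [/\ pi = [set U], gB U = E & vB U = v].

Definition del_vertex (V : finType) (E : {set {set V}}) (c : V) : {set {set V}} :=
  [set e in E | c \notin e].

Definition cutpoint (V : finType) (U : {set V}) (E : {set {set V}}) (c : V) : Prop :=
  c \in U /\ ~ gconnected (U :\ c) (del_vertex E c).

(* Main.v *)
Require Import Defs.
From mathcomp Require Import all_boot zify.
Set Implicit Arguments. Unset Strict Implicit. Unset Printing Implicit Defensive.

Lemma adj_sym (T : finType) (E : {set {set T}}) : symmetric (adj E).
Proof. by move=> x y; rewrite /adj setUC. Qed.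

Lemma connect_closure (T : finType) (e : rel T) (P : pred T) x y :
  (forall a b, P a -> e a b -> P b) -> P x -> connect e x y -> P y.
Proof.
move=> H Px /connectP [p pth ->]; elim: p x Px pth => [|a p IH] x Px //=.
by case/andP=> exa pth; apply: (IH a (H _ _ Px exa) pth).
Qed.

Lemma connect_restr (T : finType) (e1 e2 : rel T) (P : pred T) x y :
  (forall a b, P a -> e1 a b -> P b /\ e2 a b) -> P x -> connect e1 x y -> connect e2 x y.
Proof.
move=> H Px /connectP [p pth ->]; elim: p x Px pth => [|a p IH] x Px /=.
  by rewrite connect0.
case/andP=> exa pth; have [Pa e2xa] := H _ _ Px exa.
exact: connect_trans (connect1 e2xa) (IH a Pa pth).
Qed.

Lemma connect_map (T T' : finType) (e : rel T) (e' : rel T') (f : T -> T') x y :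
  (forall a b, e a b -> f a = f b \/ e' (f a) (f b)) -> connect e x y -> connect e' (f x) (f y).
Proof.
move=> H /connectP [p pth ->]; elim: p x pth => [|a p IH] x /=.
  by rewrite connect0.
case/andP=> exa pth; apply: connect_trans _ (IH a pth).
by case: (H _ _ exa) => [->|h]; [rewrite connect0 | apply: connect1].
Qed.

Lemma set2_imset (T T' : finType) (g : T -> T') a b : [set g a; g b] = g @: [set a; b].
Proof. by rewrite imsetU1 imset_set1. Qed.

Lemma simple_edge (T : finType) (U : {set T}) (E : {set {set T}}) a b :
  simple_graph U E -> [set a; b] \in E -> [/\ a != b, a \in U & b \in U].
Proof.
move=> sE /sE [x [y [xy xU yU eq]]].
have ain : a \in [set x; y] by rewrite -eq set21.
have bin : b \in [set x; y] by rewrite -eq set22.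
move: ain bin; rewrite !inE => ain bin.
split; last first.
- by case/orP: bin => /eqP ->.
- by case/orP: ain => /eqP ->.
apply/eqP => ab; subst b.
have : x \in [set a; a] by rewrite eq set21.
have : y \in [set a; a] by rewrite eq set22.
by rewrite !inE !orbb => /eqP hy /eqP hx; rewrite hx hy eqxx in xy.
Qed.

Lemma nocut_prime (T : finType) (U : {set T}) (E : {set {set T}}) (v : T) :
  pointed_conn U E v -> (forall c, ~ cutpoint U E c) -> is_prime U E v.
Proof.
move=> [sE cE vU] nocut pi gB vB Eo B0 partpi hB [sEo cEo B0pi] Edef vdef.
case/and3P: partpi => /eqP covpi tpi npi0.
have sub_U: forall S, S \in pi -> S \subset U.
  by move=> S Spi; rewrite -covpi; exact: bigcup_sup.
have same: forall S S' x, S \in pi -> S' \in pi -> x \in S -> x \in S' -> S = S'.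
  by move=> S S' x Sp S'p xS xS'; rewrite -(def_pblock tpi Sp xS) (def_pblock tpi S'p xS').
have [piU|piU] := eqVneq pi [set U].
  right. have B0U : B0 = U by move: B0pi; rewrite piU inE => /eqP.
  have Eo0 : forall S S', [set S; S'] \in Eo -> False.
    move=> S S' /(simple_edge sEo) [SS' Sp S'p]; move: Sp S'p SS'.
    by rewrite piU !inE => /eqP -> /eqP ->; rewrite eqxx.
  split=> //; last by rewrite vdef B0U.
  rewrite Edef /prod_edges piU big_set1.
  apply/setP => e; rewrite in_setU; apply/idP/idP=> [->//|].
  case/orP => [//|/imset2P [S S' _ ]].
  by rewrite inE => /andP [_ h]; case: (Eo0 _ _ h).
have [pisg|pisg] := eqVneq pi [set [set x] | x in U]; first by left.
exfalso.
have [/existsP [B /andP [Bpi Bbig]] | nobig] := boolP [exists B in pi, 1 < #|B|]; last first.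
  have card1 : forall S, S \in pi -> exists x, S = [set x].
    move=> S Spi; apply/cards1P.
    have h1 : ~~ (1 < #|S|).
      by move: nobig; rewrite negb_exists => /forallP /(_ S); rewrite Spi.
    have h2 : S != set0 by apply: contraNneq npi0 => <-.
    rewrite -card_gt0 in h2; lia.
  move/eqP: pisg; apply; apply/setP => S; apply/idP/imsetP.
  - move=> Spi; have [x Sx] := card1 S Spi; exists x => //.
    by apply: (subsetP (sub_U _ Spi)); rewrite Sx set11.
  - case=> x xU ->; move: xU; rewrite -covpi => /bigcupP [S0 Spi xS].
    have [y Sy] := card1 S0 Spi; move: xS; rewrite Sy inE => /eqP ->.
    by rewrite -Sy.
have [x xB xc] : exists2 x, x \in B & x != vB B.
  have : 0 < #|B :\ vB B|.
    by have := cardsD1 (vB B) B; case: (vB B \in B) => /=; lia.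
  by case/card_gt0P => x; rewrite !inE => /andP [xc xB]; exists x.
have [B' B'pi B'B]: exists2 B', B' \in pi & B' != B.
  case: (boolP [exists S in pi, S != B]) => [/existsP [S /andP [? ?]]|h]; first by exists S.
  exfalso; move/eqP: piU; apply.
  have piB : pi = [set B].
    apply/setP => S; rewrite inE; apply/idP/eqP => [Spi|->//].
    by move: h; rewrite negb_exists => /forallP /(_ S); rewrite Spi /= negbK => /eqP.
  by rewrite -covpi piB /cover big_set1.
have [y yB'] : exists y, y \in B'.
  by apply/set0Pn; apply: contraNneq npi0 => <-.
set c := vB B.
have cB : c \in B by case: (hB B Bpi).
apply: (nocut c); split; first by apply: (subsetP (sub_U _ Bpi)).
move=> conn.
have yU := subsetP (sub_U _ B'pi) y yB'.
have xU := subsetP (sub_U _ Bpi) x xB.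
have yc : y != c.
  apply: contraNneq B'B => yc.
  by apply/eqP; apply: (same _ _ y B'pi Bpi) => //; rewrite yc.
have := conn x y; rewrite !inE xc yc xU yU => /(_ isT isT) hxy.
have hP : forall a b, (fun u => (u \in B) && (u != c)) a -> adj (del_vertex E c) a b -> (fun u => (u \in B) && (u != c)) b.
  move=> a b /andP [aB ac]; rewrite /adj /del_vertex inE => /andP [abE cab].
  rewrite !inE negb_or eq_sym [c == b]eq_sym in cab; case/andP: cab => _ bc.
  rewrite bc andbT.
  rewrite Edef in_setU in abE; case/orP: abE => [/bigcupP [S Spi abS] | /imset2P [S1 S2 S1pi S2in eq]].
  + case: (hB S Spi) => sS _ _; have [_ aS bS] := simple_edge sS abS.
    by rewrite -(same _ _ a Spi Bpi aS aB).
  + move: S2in; rewrite inE => /andP [S2pi _].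
    have : a \in [set vB S1; vB S2] by rewrite -eq set21.
    rewrite !inE => /orP [] /eqP av.
    * have S1B : S1 = B by apply: (same _ _ a S1pi Bpi) => //; rewrite av; case: (hB S1 S1pi).
      by rewrite av S1B eqxx in ac.
    * have S2B : S2 = B by apply: (same _ _ a S2pi Bpi) => //; rewrite av; case: (hB S2 S2pi).
      by rewrite av S2B eqxx in ac.
have := connect_closure hP _ hxy; rewrite xB xc => /(_ isT).
move=> /andP [yB _]; move/eqP: B'B; apply.
  by apply: (same _ _ y B'pi Bpi).
Qed.

Lemma connect_until (T : finType) (e1 e2 : rel T) (P : pred T) x y :
  (forall a b, P a -> e1 a b -> (b = y \/ P b) /\ e2 a b) -> P x \/ x = y ->
  connect e1 x y -> connect e2 x y.
Proof.
move=> H Px /connectP [p pth ylast]; elim: p x Px pth ylast => [|a p IH] x Px /=.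
  by move=> _ ->; rewrite connect0.
case/andP=> exa pth ylast.
case: Px => [Px|->]; last by rewrite connect0.
have [Pa e2xa] := H _ _ Px exa.
apply: connect_trans (connect1 e2xa) (IH a _ pth ylast).
by case: Pa; [right|left].
Qed.

Lemma cut_notprime (T : finType) (U : {set T}) (E : {set {set T}}) (v : T) (c : T) :
  pointed_conn U E v -> cutpoint U E c -> ~ is_prime U E v.
Proof.
move=> [sE cE vU] [cU ncon] prime.
pose G' := adj (del_vertex E c).
have symG : connect_sym G' := sym_connect_sym (@adj_sym _ _).
have [x [y [xU yU nxy]]] : exists x y, [/\ x \in U :\ c, y \in U :\ c & ~~ connect G' x y].
  case: (boolP [exists x, exists y, [&& x \in U :\ c, y \in U :\ c & ~~ connect G' x y]]).
    by case/existsP => x /existsP [y /and3P [? ? ?]]; exists x, y.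
  move=> h; exfalso; apply: ncon => x y xU yU.
  move: h; rewrite negb_exists => /forallP /(_ x); rewrite negb_exists => /forallP /(_ y).
  by rewrite xU yU /= negbK.
have [w [z [wU zU nwz hv]]] : exists w z, [/\ w \in U :\ c, z \in U :\ c, ~~ connect G' w z
     & (v == c) || ~~ connect G' w v].
  case: (eqVneq v c) => [->|vc]; first by exists x, y; split => //; rewrite eqxx.
  case: (boolP (connect G' x v)) => xv; last by exists x, y.
  exists y, x; split => //; first by rewrite symG.
  apply/negP => yv; move/negP: nxy; apply.
  by apply: connect_trans xv _; rewrite symG.
pose C := [set u in U :\ c | connect G' w u].
pose B := c |: C.
have wC : w \in C by rewrite inE wU connect0.
have wc : w != c by move: wU; rewrite !inE => /andP [].
have cB : c \in B by rewrite in_setU1 eqxx.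
have wB : w \in B by rewrite in_setU1 wC orbT.
have zB : z \notin B.
  rewrite !inE negb_or; move: zU; rewrite !inE => /andP [-> _] /=.
  by rewrite negb_and nwz orbT.
have zc : z != c by move: zU; rewrite !inE => /andP [].
have CU : forall u, u \in C -> u \in U by move=> u; rewrite !inE => /andP [/andP [_ ->]].
have Cc : forall u, u \in C -> u != c by move=> u; rewrite !inE => /andP [/andP [-> _]].
have BU : forall u, u \in B -> u \in U.
  by move=> u; rewrite in_setU1 => /orP [/eqP ->|/CU].
have Bns : forall u, B != [set u].
  move=> u; apply/eqP => Bu.
  have : c \in [set u] by rewrite -Bu.
  have : w \in [set u] by rewrite -Bu.
  by rewrite !inE => /eqP wu /eqP cu; rewrite wu cu eqxx in wc.
have clos : forall a b, a \in C -> [set a; b] \in E -> b = c \/ b \in C.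
  move=> a b aC abE; have [ab _ bU] := simple_edge sE abE.
  case: (eqVneq b c) => [->|bc]; [by left | right].
  rewrite inE !inE bc bU /=.
  move: (aC); rewrite inE => /andP [_ wa]; apply: connect_trans wa (connect1 _).
  rewrite /G' /adj /del_vertex inE abE !inE negb_or eq_sym (Cc a) //=.
  by rewrite eq_sym.
pose f u := if u \in B then B else [set u].
have fB : forall u, u \in B -> f u = B by move=> u uB; rewrite /f uB.
have fnB : forall u, u \notin B -> f u = [set u] by move=> u uB; rewrite /f (negbTE uB).
pose pi := preim_partition f U.
have partpi : partition pi U := preim_partitionP f U.
have blk : forall u, u \in U -> [set y in U | f u == f y] = f u.
  move=> u uU; apply/setP => t; rewrite inE.
  case: (boolP (u \in B)) => uB; [rewrite (fB _ uB) | rewrite (fnB _ uB)].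
  - case: (boolP (t \in B)) => tB; first by rewrite (fB _ tB) eqxx BU.
    by rewrite (fnB _ tB) (negbTE (Bns t)) andbF ?(negbTE tB).
  - case: (boolP (t \in B)) => tB.
      rewrite (fB _ tB) eq_sym (negbTE (Bns u)) andbF inE.
      by apply/esym/negbTE/eqP => tu; rewrite -tu tB in uB.
    rewrite (fnB _ tB) inE; apply/idP/idP => [/andP [_ /eqP h]|/eqP ->].
      have : t \in [set u] by rewrite h set11.
      by rewrite inE.
    by rewrite uU eqxx.
have pi_mem : forall S, S \in pi -> exists2 u, u \in U & S = f u.
  by move=> S /imsetP [u uU ->]; exists u => //; rewrite blk.
have fpi : forall u, u \in U -> f u \in pi.
  by move=> u uU; rewrite -blk //; apply: imset_f.
pose vB S := if S == B then c else odflt c [pick t in S].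
have vBf : forall u, vB (f u) = if u \in B then c else u.
  move=> u; rewrite /vB /f; case: (boolP (u \in B)) => uB; first by rewrite eqxx.
  rewrite eq_sym (negbTE (Bns u)); case: pickP => [t|] /=; first by rewrite inE => /eqP.
  by move=> /(_ u); rewrite inE eqxx.
have edgeF : forall a b, [set a; b] \in E -> f a != f b -> vB (f a) = a /\ vB (f b) = b.
  have side : forall a b, [set a; b] \in E -> f a != f b -> vB (f a) = a.
    move=> a b abE fab; rewrite vBf; case: (boolP (a \in B)) => // aB.
    move: aB; rewrite in_setU1 => /orP [/eqP -> //|aC].
    case: (clos _ _ aC abE) => [bc|bC].
      have aB : a \in B by rewrite in_setU1 aC orbT.
      by move: fab; rewrite bc (fB c cB) (fB a aB) eqxx.
    have aB : a \in B by rewrite in_setU1 aC orbT.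
    have bB : b \in B by rewrite in_setU1 bC orbT.
    by move: fab; rewrite (fB a aB) (fB b bB) eqxx.
  move=> a b abE fab; split; first exact: side abE fab.
  by apply: (side b a); [rewrite setUC | rewrite eq_sym].
pose gB S := if S == B then [set e in E | e \subset B] else set0.
pose Eo := [set e : {set {set T}} | [exists S1 in pi, exists S2 in pi,
   [&& S1 != S2, [set vB S1; vB S2] \in E & e == [set S1; S2]]]].
have Bpi : B \in pi by rewrite -(fB c cB); apply: fpi.
have EoF : forall a b, [set a; b] \in E -> f a != f b -> [set f a; f b] \in Eo.
  move=> a b abE fab; have [_ aU bU] := simple_edge sE abE.
  have [va vb] := edgeF a b abE fab.
  rewrite /Eo inE; apply/existsP; exists (f a); rewrite fpi //=; apply/existsP; exists (f b).
  by rewrite fpi //= fab va vb abE eqxx.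
have [pisg | [piU _ _]] : pi = [set [set x] | x in U] \/ [/\ pi = [set U], gB U = E & vB U = v].
  apply: (prime pi gB vB Eo (f v)) => //.
  - move=> S /pi_mem [u uU ->]; case: (boolP (u \in B)) => uB.
    + rewrite (fB _ uB) /gB /vB eqxx; split => //.
      * move=> e; rewrite inE => /andP [eE eB]; have [a [b [ab aU bU ee]]] := sE e eE.
        exists a, b; split => //; apply: (subsetP eB); rewrite ee in_set2 eqxx ?orbT //.
      * have toc : forall a, a \in B -> connect (adj [set e in E | e \subset B]) a c.
          move=> a aB; apply: (@connect_until _ _ _ (mem C)) (cE a c (BU a aB) cU).
          - move=> a' b' a'C; have {}a'C : a' \in C := a'C; rewrite /adj => a'b'E; split; first exact: clos a'C a'b'E.
            rewrite /adj inE a'b'E /=; apply/subsetP => t; rewrite in_set2 => /orP [] /eqP ->.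
              by rewrite in_setU1 a'C orbT.
            by case: (clos _ _ a'C a'b'E) => [->|b'C]; rewrite in_setU1 ?eqxx ?b'C ?orbT.
          - by move: aB; rewrite in_setU1 => /orP [/eqP ->|aC]; [right|left].
        move=> a b aB bB; apply: connect_trans (toc a aB) _.
        by rewrite (sym_connect_sym (@adj_sym _ _)); exact: toc.
    + have h := vBf u; rewrite (fnB _ uB) (negbTE uB) in h.
      rewrite (fnB _ uB) /gB (eq_sym [set u]) (negbTE (Bns u)); split.
      * by move=> e; rewrite inE.
      * by move=> a b; rewrite !inE => /eqP -> /eqP ->; rewrite connect0.
      * by rewrite h set11.
  - split; last exact: (fpi v vU).
    + move=> e; rewrite /Eo inE => /existsP [S1 /andP [S1pi /existsP [S2 /andP [S2pi /and3P [ne _ /eqP ->]]]]].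
      by exists S1, S2.
    + move=> S1 S2 /pi_mem [u1 u1U ->] /pi_mem [u2 u2U ->].
      apply: (@connect_map _ _ (adj E)) (cE _ _ u1U u2U).
      move=> a b abE; case: (eqVneq (f a) (f b)) => [->|fab]; [by left | right].
      exact: EoF.
  - apply/setP => e; rewrite /prod_edges in_setU; apply/idP/idP.
    + move=> eE; have [a [b [ab aU bU ee]]] := sE e eE; rewrite ee in eE *.
      case: (eqVneq (f a) (f b)) => fab.
      * apply/orP; left; apply/bigcupP; exists B => //; rewrite /gB eqxx inE eE /=.
        have [aB bB] : a \in B /\ b \in B.
          case: (boolP (a \in B)) => aB; case: (boolP (b \in B)) => bB //.
          - by move: fab; rewrite (fB _ aB) (fnB _ bB) => /eqP; rewrite (negbTE (Bns b)).
          - by move: fab; rewrite (fB _ bB) (fnB _ aB) => /eqP; rewrite eq_sym (negbTE (Bns a)).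
          - move: fab; rewrite (fnB _ aB) (fnB _ bB) => fab.
            have : a \in [set b] by rewrite -fab set11.
            by rewrite inE (negbTE ab).
        by apply/subsetP => t; rewrite in_set2 => /orP [] /eqP ->.
      * apply/orP; right; apply/imset2P; exists (f a) (f b); rewrite ?fpi //.
          by rewrite inE fpi //= EoF.
        by have [-> ->] := edgeF a b eE fab.
    + case/orP => [/bigcupP [S Spi] | /imset2P [S1 S2 S1pi S2in ->]].
        by rewrite /gB; case: (S == B); rewrite inE // => /andP [].
      move: S2in; rewrite inE => /andP [_]; rewrite /Eo inE.
      case/existsP => S1' /andP [_ /existsP [S2' /andP [_ /and3P [_ h /eqP eq]]]].
      by rewrite set2_imset eq -set2_imset.
  - rewrite vBf; case: (boolP (v \in B)) => // vinB.
    move: vinB; rewrite in_setU1 => /orP [/eqP -> //|vC].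
    move: vC; rewrite /C !inE => /andP [/andP [vc _] wv].
    by move: hv; rewrite (negbTE vc) wv.
- have : B \in [set [set x] | x in U] by rewrite -pisg.
  by case/imsetP => u _ Bu; move/eqP: (Bns u).
- have zU' : z \in U by move: zU; rewrite !inE => /andP [].
  have : f z \in [set U] by rewrite -piU fpi.
  rewrite (fnB _ zB) inE => /eqP zUe.
  have : c \in [set z] by rewrite zUe.
  by rewrite inE => /eqP cz; rewrite cz eqxx in zc.
Qed.

Unset Implicit Arguments.

Theorem mainTheorem9 (T : finType) (U : {set T}) (E : {set {set T}}) (v : T) :
  pointed_conn U E v ->
  (is_prime U E v <-> (forall c : T, ~ cutpoint U E c)).
Proof.
move=> pc; split.
- by move=> pr c cut; exact: (cut_notprime pc cut pr).
- exact: nocut_prime pc.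
Qed.
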